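(* Let $L\in\{1,2,\dots,q-1\}$. Every $L$-MDS code over $F=\mathrm{GF}(q)$ is MDS.
   Context: $\mathsf w(\cdot)$ denotes Hamming weight. For $L\in\mathbb Z^+$ and nonnegative $\tau\in\frac{1}{L+1}\mathbb Z$, a code $\mathcal C\subseteq F^n$ is strongly-$(\tau,L)$-list decodable if there do not exist $y\in F^n$ and $L+1$ distinct codewords $c_0,\dots,c_L\in\mathcal C$ with $\sum_{m=0}^{L}\mathsf w(y-c_m)\le(L+1)\tau$. A linear $[n,k]$ code over $F$ is called $L$-MDS if it is strongly-$\left(\frac{L(n-k)}{L+1},L\right)$-list decodable; equivalently, any $L+1$ distinct vectors lying in a common coset of the code have total Hamming weight greater than $L(n-k)$. *)

(* Defs.v *)
From HB Require Import structures.
From mathcomp Require Import all_boot all_order all_algebra all_field.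
Set Implicit Arguments. Unset Strict Implicit. Unset Printing Implicit Defensive.
Import GRing.Theory.
Local Open Scope ring_scope.

Definition wt (F : fieldType) (n : nat) (v : 'rV[F]_n) : nat :=
  #|[set i : 'I_n | v 0 i != 0]|.

(* A linear code of length n over F is a subspace C of F^n; its dimension
   k is \dim C.  Strong (tau, L)-list decodability, where T = (L+1) * tau
   (a nonnegative integer since tau is in (1/(L+1))Z):  there is no y and
   no L+1 distinct codewords c_0..c_L with sum_m w(y - c_m) <= T. *)
Definition strongly_list_decodable (F : fieldType) (n : nat)
    (C : {vspace 'rV[F]_n}) (L T : nat) : Prop :=
  ~ exists (y : 'rV[F]_n) (c : 'I_L.+1 -> 'rV[F]_n),
      [/\ injective c, (forall m, c m \in C) &
          (\sum_(m < L.+1) wt (y - c m) <= T)%N].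

(* L-MDS: strongly-(L(n-k)/(L+1), L)-list decodable, i.e. T = L (n - k). *)
Definition L_MDS (F : fieldType) (n : nat) (C : {vspace 'rV[F]_n}) (L : nat) : Prop :=
  strongly_list_decodable C L (L * (n - \dim C)).

Definition MDS (F : fieldType) (n : nat) (C : {vspace 'rV[F]_n}) : Prop :=
  forall c : 'rV[F]_n, c \in C -> c != 0 -> (n - \dim C < wt c)%N.

(* Main.v *)
Require Import Defs.
From HB Require Import structures.
From mathcomp Require Import all_boot all_order all_algebra all_field.
Set Implicit Arguments. Unset Strict Implicit. Unset Printing Implicit Defensive.
Import GRing.Theory.
Local Open Scope ring_scope.

Lemma wtZ (F : fieldType) n (a : F) (v : 'rV[F]_n) : a != 0 -> wt (a *: v) = wt v.
Proof.
move=> a0; rewrite /wt; apply: eq_card => i; rewrite !inE mxE mulf_eq0.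
by rewrite (negbTE a0).
Qed.

Lemma wt0 (F : fieldType) n : wt (0 : 'rV[F]_n) = 0%N.
Proof. by rewrite /wt; apply/eqP; rewrite cards_eq0; apply/eqP/setP => i; rewrite !inE mxE eqxx. Qed.

Theorem mainTheorem8 (F : finFieldType) (n : nat) (C : {vspace 'rV[F]_n}) (L : nat) :
  (1 <= L <= #|F|.-1)%N -> L_MDS C L -> MDS C.
Proof.
move=> /andP[L1 LF] H c cC c0; rewrite ltnNge; apply/negP => hc; apply: H.
have F0 : (0 < #|F|)%N by apply/card_gt0P; exists 0.
have le : (L.+1 <= #|F|)%N by rewrite -(prednK F0) ltnS.
pose g (i : 'I_L.+1) : F := enum_val (widen_ord le i).
have ginj : injective g.
  by move=> i j /enum_val_inj /(congr1 val) /= /val_inj.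
exists 0, (fun m => (g m - g ord0) *: c); split.
- move=> i j /= /eqP; rewrite -subr_eq0 -scalerBl scaler_eq0 (negbTE c0) orbF.
  by rewrite opprB addrA subrK subr_eq0 => /eqP /ginj.
- by move=> m; rewrite memvZ.
- rewrite big_ord_recl /= subrr scale0r subr0 wt0 add0n.
  rewrite (eq_bigr (fun _ => wt c)); last first.
    move=> i _; rewrite sub0r -scaleNr wtZ // oppr_eq0 subr_eq0.
    by apply/eqP => /ginj.
  by rewrite sum_nat_const card_ord; apply: leq_mul.
Qed.
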